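(* Let $n\geq1$. Every connected component of an effectively open subset of $\mathbb{R}^n$ is effectively open.
   Context: A subset of $\mathbb{R}^n$ is effectively open if it equals $\bigcup_{a\in W}\beta_a$ for some c.e. set $W\subseteq\omega$, where $\beta$ is a standard computable numbering of all rational open balls $B(a,r)$ with $a\in\mathbb{Q}^n$, $r\in\mathbb{Q}^+$ (together with the empty ball). *)

(* Defs.v *)
From Stdlib Require Import Reals QArith Qreals ZArith List Arith Cantor.
From Stdlib Require Fin.
Import ListNotations.
Open Scope R_scope.

(* Untyped syntax of primitive recursive functions; arguments are a list of
   naturals (missing arguments default to 0, extra ones are ignored), so every
   term denotes a primitive recursive function. *)
Inductive PR : Type :=
| PRzero : PR
| PRsucc : PR
| PRproj : nat -> PR
| PRcomp : PR -> list PR -> PR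
| PRrec  : PR -> PR -> PR.

Fixpoint PReval (p : PR) (args : list nat) : nat :=
  match p with
  | PRzero => 0
  | PRsucc => S (hd 0%nat args)
  | PRproj i => nth i args 0%nat
  | PRcomp g fs =>
      PReval g ((fix mp (l : list PR) : list nat :=
                   match l with
                   | nil => nil
                   | f :: l' => PReval f args :: mp l'
                   end) fs)
  | PRrec g h =>
      match args with
      | nil => PReval g nil
      | x :: rest =>
          nat_rect (fun _ => nat) (PReval g rest)
                   (fun y acc => PReval h (y :: acc :: rest)) x
      end
  end.

(* A set W of naturals is computably enumerable iff it is the projection of a
   primitive recursive relation (Kleene normal form / Sigma^0_1). *)
Definition ce (W : nat -> Prop) : Prop :=
  exists f : PR, forall x, W x <-> exists y, PReval f [x; y] = 0%nat.

Definition Rn (n : nat) : Type := Fin.t n -> R.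

Fixpoint sumFin (n : nat) : (Fin.t n -> R) -> R :=
  match n with
  | O => fun _ => 0
  | S m => fun f => f Fin.F1 + sumFin m (fun i => f (Fin.FS i))
  end.

Definition dist {n : nat} (x y : Rn n) : R :=
  sqrt (sumFin n (fun i => (x i - y i) ^ 2)).

Definition ball {n : nat} (a : Rn n) (r : R) : Rn n -> Prop :=
  fun x => dist x a < r.

Definition is_open {n : nat} (U : Rn n -> Prop) : Prop :=
  forall x, U x -> exists eps, eps > 0 /\ forall y, ball x eps y -> U y.

Definition connected {n : nat} (S : Rn n -> Prop) : Prop :=
  ~ exists U V : Rn n -> Prop,
      is_open U /\ is_open V /\
      (forall x, S x -> U x \/ V x) /\
      (exists x, S x /\ U x) /\ (exists x, S x /\ V x) /\
      (forall x, S x -> U x -> V x -> False).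

Definition conn_component {n : nat} (A C : Rn n -> Prop) : Prop :=
  (exists x, C x) /\ connected C /\ (forall x, C x -> A x) /\
  forall S : Rn n -> Prop,
    connected S -> (forall x, C x -> S x) -> (forall x, S x -> A x) ->
    forall x, S x -> C x.

(* nat -> Z zigzag: 0,-1,1,-2,2,... ; nat -> Q surjective *)
Definition decZ (p : nat) : Z :=
  if Nat.even p then Z.of_nat (Nat.div2 p) else (- Z.of_nat (Nat.div2 (S p)))%Z.

Definition decQ (m : nat) : Q :=
  let (p, q) := Cantor.of_nat m in Qmake (decZ p) (Pos.of_succ_nat q).

Fixpoint decQlist (n m : nat) : list Q :=
  match n with
  | O => nil
  | S k => let (p, q) := Cantor.of_nat m in decQ p :: decQlist k q
  end.

Definition decQvec (n m : nat) : Rn n :=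
  fun i => Q2R (nth (proj1_sig (Fin.to_nat i)) (decQlist n m) 0%Q).

(* beta n k = B(a, r), a in Q^n, r in Q; when r <= 0 this is the empty ball.
   Every rational ball (and the empty ball) occurs. *)
Definition beta (n k : nat) : Rn n -> Prop :=
  let (c, rc) := Cantor.of_nat k in ball (decQvec n c) (Q2R (decQ rc)).

Definition effectively_open {n : nat} (U : Rn n -> Prop) : Prop :=
  exists W : nat -> Prop, ce W /\ forall x, U x <-> exists k, W k /\ beta n k x.

(* Main.v *)
Require Import Defs.
From Stdlib Require Import Reals QArith Qreals ZArith List Arith Cantor Lia Lra Classical FunctionalExtensionality.
From Stdlib Require Fin.
Import ListNotations.
Notation dist := Defs.dist.
Notation ball := Defs.ball.
Open Scope nat_scope.

Definition pad (k : nat) (v : list nat) : list nat := map (fun i => nth i v 0%nat) (seq 0 k).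

Lemma pad_S k v : pad (S k) v = nth 0 v 0%nat :: pad k (tl v).
Proof.
  unfold pad. simpl. f_equal. rewrite <- seq_shift, map_map.
  apply map_ext. intros i. destruct v; simpl; auto. destruct i; auto.
Qed.

Lemma pad_length k v : length (pad k v) = k.
Proof. unfold pad. rewrite length_map, length_seq. auto. Qed.

Lemma pad_id l : pad (length l) l = l.
Proof.
  induction l; simpl; auto. rewrite pad_S. simpl. rewrite IHl. auto.
Qed.

Lemma nth_pad k v i : (i < k)%nat -> nth i (pad k v) 0%nat = nth i v 0%nat.
Proof.
  revert v i; induction k; intros v i Hi; [lia|].
  rewrite pad_S. destruct i; simpl; auto. rewrite IHk by lia.
  destruct v; simpl; auto. destruct i; auto.
Qed.

Lemma pad_pad k v : pad k (pad k v) = pad k v.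
Proof. rewrite <- (pad_length k v) at 1. apply pad_id. Qed.

Definition PRk (k : nat) (F : list nat -> nat) : Prop :=
  exists p, forall v, PReval p v = F (pad k v).

Lemma PRk_ext k F G : (forall v, F (pad k v) = G (pad k v)) -> PRk k F -> PRk k G.
Proof. intros H [p Hp]. exists p. intros v. rewrite Hp. auto. Qed.

Lemma mp_eq args : forall fs,
  (fix mp (l : list PR) : list nat :=
     match l with
     | nil => nil
     | f :: l' => PReval f args :: mp l'
     end) fs = map (fun f => PReval f args) fs.
Proof. induction fs; simpl; f_equal; auto. Qed.

Lemma PRk_comp m k H gs :
  PRk m H -> Forall (PRk k) gs -> length gs = m ->
  PRk k (fun v => H (map (fun g => g v) gs)).
Proof.
  intros [ph Hph] Hgs Hlen.
  assert (exists ps, Forall2 (fun p g => forall v, PReval p v = g (pad k v)) ps gs) as [ps Hps].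
  { clear Hlen. induction Hgs. exists nil; constructor.
    destruct H0 as [p Hp]. destruct IHHgs as [ps Hps]. exists (p :: ps). constructor; auto. }
  exists (PRcomp ph ps). intros v. simpl. rewrite mp_eq, Hph.
  assert (E : map (fun f => PReval f v) ps = map (fun g => g (pad k v)) gs).
  { clear -Hps. induction Hps; simpl; f_equal; auto. }
  rewrite E. f_equal. rewrite <- Hlen. rewrite <- (length_map (fun g => g (pad k v))).
  apply pad_id.
Qed.

Lemma PRk_proj k i : (i < k)%nat -> PRk k (fun v => nth i v 0%nat).
Proof. intros Hi. exists (PRproj i). intros v. simpl. rewrite nth_pad; auto. Qed.

Lemma PRk_zero k : PRk k (fun _ => 0%nat).
Proof. exists PRzero. auto. Qed.

Lemma PRk_succ0 : PRk 1 (fun v => S (nth 0 v 0%nat)).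
Proof. exists PRsucc. intros v. simpl. destruct v; auto. Qed.

Lemma PRk_rec k G H : PRk k G -> PRk (S (S k)) H ->
  PRk (S k) (fun v => nat_rect (fun _ => nat) (G (tl v)) (fun y acc => H (y :: acc :: tl v)) (nth 0 v 0%nat)).
Proof.
  intros [pg Hg] [ph Hh]. exists (PRrec pg ph). intros v.
  rewrite pad_S. simpl. destruct v as [|x r]; simpl.
  - rewrite Hg. auto.
  - rewrite Hg. induction x; simpl; auto. rewrite IHx, Hh, !pad_S. simpl. auto.
Qed.

Definition PR1 (f : nat -> nat) := PRk 1 (fun v => f (nth 0 v 0%nat)).
Definition PR2 (f : nat -> nat -> nat) := PRk 2 (fun v => f (nth 0 v 0%nat) (nth 1 v 0%nat)).

Lemma pc1 k f g : PR1 f -> PRk k g -> PRk k (fun v => f (g v)).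
Proof.
  intros Hf Hg. apply (PRk_comp 1 k _ [g] Hf); auto.
Qed.

Lemma pc2 k f g1 g2 : PR2 f -> PRk k g1 -> PRk k g2 -> PRk k (fun v => f (g1 v) (g2 v)).
Proof.
  intros Hf H1 H2. apply (PRk_comp 2 k _ [g1; g2] Hf); auto.
Qed.

Lemma PRk_const k c : PRk k (fun _ => c).
Proof.
  induction c. apply PRk_zero. apply (pc1 k S (fun _ => c)); auto. apply PRk_succ0.
Qed.

Lemma PR2_add : PR2 Nat.add.
Proof.
  assert (H := PRk_rec 1 (fun r => nth 0 r 0%nat) (fun l => S (nth 1 l 0%nat))
            (PRk_proj 1 0 ltac:(lia)) (pc1 3 S _ PRk_succ0 (PRk_proj 3 1 ltac:(lia)))).
  eapply PRk_ext; [|exact H]. intros v. simpl.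
  induction (nth 0 v 0%nat); simpl; auto.
Qed.

Lemma PR2_mul : PR2 Nat.mul.
Proof.
  assert (H := PRk_rec 1 (fun r => 0%nat) (fun l => nth 1 l 0%nat + nth 2 l 0%nat)
            (PRk_zero 1) (pc2 3 _ _ _ PR2_add (PRk_proj 3 1 ltac:(lia)) (PRk_proj 3 2 ltac:(lia)))).
  eapply PRk_ext; [|exact H]. intros v. simpl.
  induction (nth 0 v 0%nat); simpl; auto. rewrite IHn. lia.
Qed.

Lemma PR1_pred : PR1 pred.
Proof.
  assert (H := PRk_rec 0 (fun r => 0%nat) (fun l => nth 0 l 0%nat)
            (PRk_zero 0) (PRk_proj 2 0 ltac:(lia))).
  eapply PRk_ext; [|exact H]. intros v. simpl.
  destruct (nth 0 v 0%nat); simpl; auto.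
Qed.

Lemma PR2_sub : PR2 Nat.sub.
Proof.
  assert (H := PRk_rec 1 (fun r => nth 0 r 0%nat) (fun l => pred (nth 1 l 0%nat))
            (PRk_proj 1 0 ltac:(lia)) (pc1 3 _ _ PR1_pred (PRk_proj 3 1 ltac:(lia)))).
  assert (H2 := PRk_comp 2 2 _ [fun v => nth 1 v 0; fun v => nth 0 v 0] H
     ltac:(repeat constructor; apply PRk_proj; lia) eq_refl).
  eapply PRk_ext; [|exact H2]. intros v. simpl.
  induction (nth 1 v 0); simpl. lia. rewrite IHn. lia.
Qed.

Definition bsum (n : nat) (f : nat -> nat) : nat :=
  nat_rect (fun _ => nat) 0%nat (fun y acc => acc + f y)%nat n.

Lemma bsum_0 n f : bsum n f = 0%nat <-> forall i, (i < n)%nat -> f i = 0%nat.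
Proof.
  induction n; simpl. split; intros; auto; lia.
  fold (bsum n f). split.
  - intros H i Hi. assert (bsum n f = 0 /\ f n = 0)%nat as [H1 H2] by lia.
    destruct (Nat.eq_dec i n). subst; auto. apply IHn; auto; lia.
  - intros H. rewrite (proj2 IHn) by (intros; apply H; lia). rewrite H; lia.
Qed.

Lemma PRk_bsum k b B : PRk k b -> PRk (S k) B ->
  PRk k (fun v => bsum (b v) (fun i => B (i :: v))).
Proof.
  intros Hb HB.
  assert (HB' : PRk (S (S k)) (fun l => B (nth 0 l 0%nat :: tl (tl l)))).
  { assert (HH := PRk_comp (S k) (S (S k)) B (map (fun i => fun l => nth i l 0%nat) (0 :: seq 2 k)) HB).
    eapply PRk_ext; [|apply HH].
    - intros v. cbv beta. rewrite map_map. rewrite !pad_S. simpl. f_equal. f_equal.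
      rewrite <- seq_shift, <- seq_shift, !map_map. simpl.
      change (map (fun x => nth x (pad k (tl (tl v))) 0) (seq 0 k)) with (pad k (pad k (tl (tl v)))).
      apply pad_pad.
    - apply Forall_forall. intros g Hg. apply in_map_iff in Hg. destruct Hg as [i [<- Hi]].
      apply PRk_proj. destruct Hi as [<-|Hi]. lia. apply in_seq in Hi. lia.
    - simpl. rewrite length_map, length_seq. auto. }
  assert (HR := PRk_rec k (fun _ => 0%nat) (fun l => nth 1 l 0%nat + B (nth 0 l 0%nat :: tl (tl l)))%nat
                 (PRk_zero k) (pc2 _ _ _ _ PR2_add (PRk_proj (S (S k)) 1 ltac:(lia)) HB')).
  assert (HC := PRk_comp (S k) k _ (b :: map (fun i => fun l => nth i l 0%nat) (seq 0 k)) HR).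
  eapply PRk_ext; [|apply HC].
  - intros v. simpl.
    assert (E : map (fun g => g (pad k v)) (map (fun i l => nth i l 0%nat) (seq 0 k)) = pad k v).
    { rewrite map_map. change (map (fun i => nth i (pad k v) 0%nat) (seq 0 k)) with (pad k (pad k v)).
      apply pad_pad. }
    rewrite E. unfold bsum. induction (b (pad k v)); simpl; auto.
  - constructor; auto. apply Forall_forall. intros g Hg. apply in_map_iff in Hg.
    destruct Hg as [i [<- Hi]]. apply in_seq in Hi. apply PRk_proj. lia.
  - simpl. rewrite length_map, length_seq. auto.
Qed.
Open Scope nat_scope.

Definition Tn (s : nat) : nat := nat_rect (fun _ => nat) 0 (fun y acc => acc + S y) s.
Definition wc (m : nat) : nat := bsum m (fun t => 1 - (S t * S (S t) - 2 * m)).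
Definition cy (m : nat) : nat := m - Tn (wc m).
Definition cx (m : nat) : nat := wc m - cy m.

Lemma Tn_spec s : 2 * Tn s = s * S s.
Proof. induction s; simpl Tn; simpl; auto. fold (Tn s). nia. Qed.

Lemma bsum_S n f : bsum (S n) f = bsum n f + f n.
Proof. reflexivity. Qed.

Lemma bsum_count m w : bsum m (fun t => if t <? w then 1 else 0) = Nat.min m w.
Proof.
  induction m. reflexivity. rewrite bsum_S, IHm.
  destruct (Nat.ltb_spec m w); lia.
Qed.

Lemma bsum_ext n f g : (forall i, i < n -> f i = g i) -> bsum n f = bsum n g.
Proof. induction n. reflexivity. intros H. rewrite !bsum_S, IHn, H; auto. Qed.

Lemma cantor_rec_T s : nat_rec (fun _ => nat) 0 (fun i m => S i + m) s = Tn s.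
Proof. induction s. reflexivity.
  transitivity (S s + nat_rec (fun _ => nat) 0 (fun i m => S i + m) s). reflexivity.
  rewrite IHs. change (Tn (S s)) with (Tn s + S s). lia. Qed.

Lemma cx_cy m : Cantor.of_nat m = (cx m, cy m).
Proof.
  destruct (Cantor.of_nat m) as [x y] eqn:E.
  assert (Hm : m = y + Tn (x + y)).
  { rewrite <- (cancel_to_of m), E. unfold to_nat. rewrite cantor_rec_T. f_equal. f_equal. lia. }
  assert (HT := Tn_spec (x + y)).
  assert (Hw : wc m = x + y).
  { unfold wc. rewrite (bsum_ext _ _ (fun t => if t <? x + y then 1 else 0)).
    - rewrite bsum_count. nia.
    - intros t _. destruct (Nat.ltb_spec t (x + y)); nia. }
  unfold cx, cy. rewrite Hw. f_equal; lia.
Qed.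

Lemma cx_pair a b : cx (to_nat (a, b)) = a.
Proof. pose proof (cx_cy (to_nat (a,b))). rewrite cancel_of_to in H. congruence. Qed.
Lemma cy_pair a b : cy (to_nat (a, b)) = b.
Proof. pose proof (cx_cy (to_nat (a,b))). rewrite cancel_of_to in H. congruence. Qed.

Lemma PR1_Tn : PR1 Tn.
Proof.
  assert (H := PRk_rec 0 (fun _ => 0) (fun l => nth 1 l 0 + S (nth 0 l 0)) (PRk_zero 0)
     (pc2 _ _ _ _ PR2_add (PRk_proj 2 1 ltac:(lia)) (pc1 _ _ _ PRk_succ0 (PRk_proj 2 0 ltac:(lia))))).
  eapply PRk_ext; [|exact H]. intros v. simpl. reflexivity.
Qed.

Lemma PR1_wc : PR1 wc.
Proof.
  assert (HB : PRk 2 (fun l => 1 - (S (nth 0 l 0) * S (S (nth 0 l 0)) - 2 * nth 1 l 0))).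
  { apply (pc2 _ _ _ _ PR2_sub). apply PRk_const.
    apply (pc2 _ _ _ _ PR2_sub).
    apply (pc2 _ _ _ _ PR2_mul). apply (pc1 _ _ _ PRk_succ0). apply PRk_proj; lia.
    apply (pc1 _ _ _ PRk_succ0). apply (pc1 _ _ _ PRk_succ0). apply PRk_proj; lia.
    apply (pc2 _ _ _ _ PR2_mul). apply PRk_const. apply PRk_proj; lia. }
  assert (H := PRk_bsum 1 _ _ (PRk_proj 1 0 ltac:(lia)) HB).
  eapply PRk_ext; [|exact H]. intros v. simpl. reflexivity.
Qed.

Lemma PR1_cy : PR1 cy.
Proof.
  unfold PR1, cy. apply (pc2 _ _ _ _ PR2_sub). apply PRk_proj; lia.
  apply (pc1 _ _ _ PR1_Tn). apply (pc1 _ _ _ PR1_wc). apply PRk_proj; lia.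
Qed.

Lemma PR1_cx : PR1 cx.
Proof.
  unfold PR1, cx. apply (pc2 _ _ _ _ PR2_sub).
  apply (pc1 _ _ _ PR1_wc). apply PRk_proj; lia.
  apply (pc1 _ _ _ PR1_cy). apply PRk_proj; lia.
Qed.

Definition ev (s : nat) : nat := nat_rect (fun _ => nat) 1 (fun _ acc => 1 - acc) s.
Definition dv2 (s : nat) : nat := nat_rect (fun _ => nat) 0 (fun y acc => acc + (1 - ev y)) s.

Lemma ev_spec s : ev s = if Nat.even s then 1 else 0.
Proof.
  induction s. reflexivity. change (ev (S s)) with (1 - ev s). rewrite IHs, Nat.even_succ, <- Nat.negb_even.
  destruct (Nat.even s); auto.
Qed.

Lemma dv2_spec s : dv2 s = Nat.div2 s.
Proof.
  assert (H : s = 2 * dv2 s + (1 - ev s)).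
  { induction s; simpl; auto. fold (ev s) (dv2 s). rewrite ev_spec in *.
    destruct (Nat.even s); simpl in *; lia. }
  pose proof (Nat.div2_odd s). rewrite ev_spec in H. rewrite <- Nat.negb_even in H0.
  destruct (Nat.even s); simpl in *; lia.
Qed.

Lemma PR1_ev : PR1 ev.
Proof.
  assert (H := PRk_rec 0 (fun _ => 1) (fun l => 1 - nth 1 l 0) (PRk_const 0 1)
     (pc2 _ _ _ _ PR2_sub (PRk_const 2 1) (PRk_proj 2 1 ltac:(lia)))).
  eapply PRk_ext; [|exact H]. intros v. simpl. reflexivity.
Qed.

Lemma PR1_dv2 : PR1 dv2.
Proof.
  assert (H := PRk_rec 0 (fun _ => 0) (fun l => nth 1 l 0 + (1 - ev (nth 0 l 0))) (PRk_zero 0)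
     (pc2 _ _ _ _ PR2_add (PRk_proj 2 1 ltac:(lia))
        (pc2 _ _ _ _ PR2_sub (PRk_const 2 1) (pc1 _ _ _ PR1_ev (PRk_proj 2 0 ltac:(lia)))))).
  eapply PRk_ext; [|exact H]. intros v. simpl. reflexivity.
Qed.

Definition itr (i m : nat) : nat := nat_rect (fun _ => nat) m (fun _ acc => cy acc) i.
Definition elem (m i : nat) : nat := cx (itr i m).

Lemma PR2_itr : PR2 itr.
Proof.
  assert (H := PRk_rec 1 (fun r => nth 0 r 0) (fun l => cy (nth 1 l 0)) (PRk_proj 1 0 ltac:(lia))
     (pc1 _ _ _ PR1_cy (PRk_proj 3 1 ltac:(lia)))).
  eapply PRk_ext; [|exact H]. intros v. simpl. reflexivity.
Qed.

Lemma itr_S i m : itr (S i) m = itr i (cy m).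
Proof. induction i. reflexivity. simpl. simpl in IHi. rewrite <- IHi. auto. Qed.

Lemma elem_repr (l : list nat) : exists m, forall i, i < length l -> elem m i = nth i l 0.
Proof.
  induction l as [|a l IH]. exists 0. simpl; intros; lia.
  destruct IH as [m Hm]. exists (to_nat (a, m)). intros [|i] Hi; unfold elem.
  - simpl. apply cx_pair.
  - rewrite itr_S, cy_pair. apply Hm. simpl in Hi. lia.
Qed.
Open Scope nat_scope.

Record rq := mkq { qP : nat; qN : nat; qD : nat }.
Definition val (q : rq) : R := ((INR (qP q) - INR (qN q)) / INR (qD q))%R.

Definition qdec (m : nat) : rq :=
  mkq (ev (cx m) * dv2 (cx m)) ((1 - ev (cx m)) * dv2 (S (cx m))) (S (cy m)).
Definition radd (a b : rq) : rq :=
  mkq (qP a * qD b + qP b * qD a) (qN a * qD b + qN b * qD a) (qD a * qD b).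
Definition rneg (a : rq) : rq := mkq (qN a) (qP a) (qD a).
Definition rsub (a b : rq) : rq := radd a (rneg b).
Definition rmul (a b : rq) : rq :=
  mkq (qP a * qP b + qN a * qN b) (qP a * qN b + qN a * qP b) (qD a * qD b).
Definition rzero : rq := mkq 0 0 1.
Definition rlt (a b : rq) : nat :=
  S (qP a * qD b + qN b * qD a) - (qP b * qD a + qN a * qD b).

Lemma qdec_val m : Q2R (decQ m) = val (qdec m).
Proof.
  unfold decQ. rewrite cx_cy. unfold Q2R, val, qdec. cbn [Qnum Qden qP qN qD].
  rewrite Znat.Zpos_P_of_succ_nat, <- Znat.Nat2Z.inj_succ, <- INR_IZR_INZ.
  unfold decZ. rewrite ev_spec, !dv2_spec.
  generalize (cx m) (cy m). intros p q.
  destruct (Nat.even p).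
  - rewrite <- INR_IZR_INZ. replace (1 - 1) with 0 by lia.
    rewrite Nat.mul_1_l, Nat.mul_0_l. unfold Rdiv. change (INR 0) with 0%R. lra.
  - rewrite Ropp_Ropp_IZR, <- INR_IZR_INZ. replace (1 - 0) with 1 by lia.
    rewrite Nat.mul_1_l, Nat.mul_0_l. unfold Rdiv. change (INR 0) with 0%R. lra.
Qed.

Lemma qdec_pos m : 0 < qD (qdec m).
Proof. simpl. lia. Qed.

Lemma INR_pos n : 0 < n -> (0 < INR n)%R.
Proof. intros. apply lt_0_INR. auto. Qed.

Lemma radd_val a b : 0 < qD a -> 0 < qD b -> val (radd a b) = (val a + val b)%R.
Proof.
  intros Ha Hb. apply INR_pos in Ha. apply INR_pos in Hb. unfold val, radd; simpl.
  rewrite !mult_INR, !plus_INR, !mult_INR. field; lra.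
Qed.

Lemma rneg_val a : val (rneg a) = (- val a)%R.
Proof. unfold val, rneg; simpl. unfold Rdiv. lra. Qed.

Lemma rsub_val a b : 0 < qD a -> 0 < qD b -> val (rsub a b) = (val a - val b)%R.
Proof. intros. unfold rsub. rewrite radd_val, rneg_val; auto; lra. Qed.

Lemma rmul_val a b : 0 < qD a -> 0 < qD b -> val (rmul a b) = (val a * val b)%R.
Proof.
  intros Ha Hb. apply INR_pos in Ha. apply INR_pos in Hb. unfold val, rmul; simpl.
  rewrite !mult_INR, !plus_INR, !mult_INR. field; lra.
Qed.

Lemma rzero_val : val rzero = 0%R.
Proof. unfold val; simpl. lra. Qed.

Lemma div_lt_iff (x y z w : R) : (0 < y)%R -> (0 < w)%R -> ((x / y < z / w)%R <-> (x * w < z * y)%R).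
Proof.
  intros Hy Hw. set (u := (x / y)%R). set (t := (z / w)%R).
  assert (Ex : x = (u * y)%R) by (unfold u; field; lra).
  assert (Ez : z = (t * w)%R) by (unfold t; field; lra).
  assert (Hyw : (0 < y * w)%R) by nra. rewrite Ex, Ez. split; intros H; nra.
Qed.

Lemma rlt_spec a b : 0 < qD a -> 0 < qD b -> (rlt a b = 0 <-> (val a < val b)%R).
Proof.
  intros Ha Hb. unfold rlt, val.
  apply INR_pos in Ha. apply INR_pos in Hb.
  rewrite div_lt_iff by auto.
  assert (E : ((INR (qP a) - INR (qN a)) * INR (qD b) < (INR (qP b) - INR (qN b)) * INR (qD a))%R
     <-> qP a * qD b + qN b * qD a < qP b * qD a + qN a * qD b).
  { split; intros H.
    - apply INR_lt. rewrite !plus_INR, !mult_INR. lra.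
    - apply lt_INR in H. rewrite !plus_INR, !mult_INR in H. lra. }
  rewrite E. lia.
Qed.

Definition PRQ k (f : list nat -> rq) :=
  PRk k (fun v => qP (f v)) /\ PRk k (fun v => qN (f v)) /\ PRk k (fun v => qD (f v)).

Lemma PRQ_qdec k g : PRk k g -> PRQ k (fun v => qdec (g v)).
Proof.
  intros Hg. unfold qdec; repeat split; cbn [qP qN qD].
  - apply (pc2 _ _ _ _ PR2_mul); apply (pc1 _ _ _ PR1_ev) || apply (pc1 _ _ _ PR1_dv2);
     apply (pc1 _ _ _ PR1_cx); auto.
  - apply (pc2 _ _ _ _ PR2_mul).
    + apply (pc2 _ _ _ _ PR2_sub). apply PRk_const. apply (pc1 _ _ _ PR1_ev). apply (pc1 _ _ _ PR1_cx); auto.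
    + apply (pc1 _ _ _ PR1_dv2). apply (pc1 _ _ _ PRk_succ0). apply (pc1 _ _ _ PR1_cx); auto.
  - apply (pc1 _ _ _ PRk_succ0). apply (pc1 _ _ _ PR1_cy); auto.
Qed.

Lemma PRQ_add k f g : PRQ k f -> PRQ k g -> PRQ k (fun v => radd (f v) (g v)).
Proof.
  intros (f1 & f2 & f3) (g1 & g2 & g3). unfold radd; repeat split; cbn [qP qN qD];
  repeat (apply (pc2 _ _ _ _ PR2_add) || apply (pc2 _ _ _ _ PR2_mul)); auto.
Qed.

Lemma PRQ_neg k f : PRQ k f -> PRQ k (fun v => rneg (f v)).
Proof. intros (f1 & f2 & f3). unfold rneg; repeat split; cbn [qP qN qD]; auto. Qed.

Lemma PRQ_sub k f g : PRQ k f -> PRQ k g -> PRQ k (fun v => rsub (f v) (g v)).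
Proof. intros. unfold rsub. apply PRQ_add; auto. apply PRQ_neg; auto. Qed.

Lemma PRQ_mul k f g : PRQ k f -> PRQ k g -> PRQ k (fun v => rmul (f v) (g v)).
Proof.
  intros (f1 & f2 & f3) (g1 & g2 & g3). unfold rmul; repeat split; cbn [qP qN qD];
  repeat (apply (pc2 _ _ _ _ PR2_add) || apply (pc2 _ _ _ _ PR2_mul)); auto.
Qed.

Lemma PRQ_zero k : PRQ k (fun _ => rzero).
Proof. repeat split; apply PRk_const. Qed.

Lemma PRk_rlt k f g : PRQ k f -> PRQ k g -> PRk k (fun v => rlt (f v) (g v)).
Proof.
  intros (f1 & f2 & f3) (g1 & g2 & g3). unfold rlt.
  apply (pc2 _ _ _ _ PR2_sub). apply (pc1 _ _ _ PRk_succ0).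
  all: repeat (apply (pc2 _ _ _ _ PR2_add) || apply (pc2 _ _ _ _ PR2_mul)); auto.
Qed.
Open Scope R_scope.

Lemma sumFin_ext n f g : (forall i, f i = g i) -> sumFin n f = sumFin n g.
Proof.
  revert f g; induction n; intros f g H; simpl; auto.
  rewrite H, (IHn (fun i => f (Fin.FS i)) (fun i => g (Fin.FS i))); auto.
Qed.

Lemma sumFin_nonneg n f : (forall i, 0 <= f i) -> 0 <= sumFin n f.
Proof.
  revert f; induction n; intros f H; simpl. lra.
  pose proof (IHn (fun i => f (Fin.FS i)) ltac:(intros; apply H)). pose proof (H Fin.F1). lra.
Qed.

Lemma sumFin_lin n f g a b : sumFin n (fun i => a * f i + b * g i) = a * sumFin n f + b * sumFin n g.
Proof.
  revert f g; induction n; intros f g; simpl. lra.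
  rewrite (IHn (fun i => f (Fin.FS i)) (fun i => g (Fin.FS i))). lra.
Qed.

Lemma sumFin_scal n f a : sumFin n (fun i => a * f i) = a * sumFin n f.
Proof.
  rewrite (sumFin_ext n _ (fun i => a * f i + 0 * f i)) by (intros; lra).
  rewrite sumFin_lin. lra.
Qed.

Definition norm2 {n} (u : Rn n) : R := sumFin n (fun i => u i ^ 2).
Definition nrm {n} (u : Rn n) : R := sqrt (norm2 u).

Lemma norm2_nonneg n (u : Rn n) : 0 <= norm2 u.
Proof. apply sumFin_nonneg. intros. apply pow2_ge_0. Qed.

Lemma quad_lemma A B C : 0 <= A -> (forall t, 0 <= A * t ^ 2 + 2 * B * t + C) -> B ^ 2 <= A * C.
Proof.
  intros HA H. destruct (Req_dec A 0) as [HA0|HA0].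
  - subst. destruct (Req_dec B 0) as [HB|HB]. subst. lra.
    specialize (H (- (C + 1) / (2 * B))). exfalso.
    replace (0 * (- (C + 1) / (2 * B)) ^ 2 + 2 * B * (- (C + 1) / (2 * B)) + C) with (-1) in H by (field; auto). lra.
  - specialize (H (- B / A)).
    replace (A * (- B / A) ^ 2 + 2 * B * (- B / A) + C) with (C - B ^ 2 / A) in H by (field; auto).
    assert (0 < A) by lra.
    assert (B ^ 2 / A <= C) by lra.
    apply (Rmult_le_compat_l A) in H1; [|lra]. unfold Rdiv in H1.
    replace (A * (B ^ 2 * / A)) with (B ^ 2) in H1 by (field; lra). lra.
Qed.

Lemma cauchy_schwarz n (a b : Rn n) :
  (sumFin n (fun i => a i * b i)) ^ 2 <= norm2 a * norm2 b.
Proof.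
  apply quad_lemma. apply norm2_nonneg.
  intros t. unfold norm2.
  assert (E : forall i, (t * a i + b i) ^ 2 = (t ^ 2) * (a i ^ 2) + 1 * (2 * t * (a i * b i) + 1 * b i ^ 2)) by (intros; ring).
  pose proof (sumFin_nonneg n (fun i => (t * a i + b i) ^ 2) ltac:(intros; apply pow2_ge_0)) as H.
  rewrite (sumFin_ext n _ _ E) in H. rewrite sumFin_lin in H.
  rewrite (sumFin_lin n (fun i => a i * b i) (fun i => b i ^ 2) (2 * t) 1) in H. lra.
Qed.

Lemma sqrt_sq_le x y : 0 <= y -> x <= y ^ 2 -> sqrt x <= y.
Proof.
  intros Hy H. rewrite <- (sqrt_pow2 y Hy). apply sqrt_le_1_alt. auto.
Qed.

Lemma minkowski n (u v : Rn n) : nrm (fun i => u i + v i) <= nrm u + nrm v.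
Proof.
  unfold nrm. apply sqrt_sq_le.
  - pose proof (sqrt_pos (norm2 u)). pose proof (sqrt_pos (norm2 v)). lra.
  - pose proof (cauchy_schwarz n u v) as CS.
    pose proof (norm2_nonneg n u) as Hu. pose proof (norm2_nonneg n v) as Hv.
    assert (E : norm2 (fun i => u i + v i) = 1 * norm2 u + 1 * (2 * sumFin n (fun i => u i * v i) + 1 * norm2 v)).
    { unfold norm2. rewrite (sumFin_ext n _ (fun i => 1 * (u i ^ 2) + 1 * (2 * (u i * v i) + 1 * v i ^ 2))) by (intros; ring).
      rewrite sumFin_lin. rewrite (sumFin_lin n (fun i => u i * v i) (fun i => v i ^ 2) 2 1). reflexivity. }
    rewrite E. set (B := sumFin n (fun i => u i * v i)) in *.
    pose proof (sqrt_sqrt _ Hu). pose proof (sqrt_sqrt _ Hv).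
    pose proof (sqrt_pos (norm2 u)). pose proof (sqrt_pos (norm2 v)).
    assert (B <= sqrt (norm2 u) * sqrt (norm2 v)).
    { assert (B ^ 2 <= (sqrt (norm2 u) * sqrt (norm2 v)) ^ 2) by (rewrite Rpow_mult_distr, !pow2_sqrt; auto).
      assert (0 <= sqrt (norm2 u) * sqrt (norm2 v)) by (apply Rmult_le_pos; auto).
      destruct (Rle_dec B 0). lra. nra. }
    nra.
Qed.

Lemma nrm_scal n (u : Rn n) c : nrm (fun i => c * u i) = Rabs c * nrm u.
Proof.
  unfold nrm, norm2. rewrite (sumFin_ext n _ (fun i => c ^ 2 * u i ^ 2)) by (intros; ring).
  rewrite sumFin_scal. rewrite sqrt_mult_alt by nra. f_equal.
  rewrite <- sqrt_Rsqr_abs. unfold Rsqr. f_equal. ring.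
Qed.

Lemma dst_nrm n (x y : Rn n) : dist x y = nrm (fun i => x i - y i).
Proof. reflexivity. Qed.

Lemma dst_nonneg n (x y : Rn n) : 0 <= dist x y.
Proof. apply sqrt_pos. Qed.

Lemma dst_sym n (x y : Rn n) : dist x y = dist y x.
Proof. unfold dist. f_equal. apply sumFin_ext. intros. ring. Qed.

Lemma dst_tri n (x y z : Rn n) : dist x z <= dist x y + dist y z.
Proof.
  rewrite !dst_nrm. pose proof (minkowski n (fun i => x i - y i) (fun i => y i - z i)).
  unfold nrm, norm2 in *. rewrite (sumFin_ext n (fun i => (x i - z i) ^ 2) (fun i => (x i - y i + (y i - z i)) ^ 2)).
  exact H. intros; ring.
Qed.

Lemma dst_sq n (x y : Rn n) : dist x y ^ 2 = sumFin n (fun i => (x i - y i) ^ 2).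
Proof. unfold dist. rewrite pow2_sqrt; auto. apply sumFin_nonneg. intros; apply pow2_ge_0. Qed.

Lemma ball_open n (a : Rn n) r : is_open (ball a r).
Proof.
  intros x Hx. unfold ball in *. exists (r - dist x a). split. lra.
  intros y Hy. unfold ball in Hy. pose proof (dst_tri n y x a). lra.
Qed.

Definition seg {n} (x y : Rn n) (t : R) : Rn n := fun i => x i + t * (y i - x i).

Lemma seg_dist n (x y : Rn n) t s : dist (seg x y t) (seg x y s) = Rabs (t - s) * dist y x.
Proof.
  rewrite !dst_nrm, <- nrm_scal. unfold nrm. f_equal. apply sumFin_ext. intros. unfold seg. ring.
Qed.

Lemma seg0 n (x y : Rn n) : seg x y 0 = x.
Proof. apply functional_extensionality. intros. unfold seg. ring. Qed.

Lemma seg1 n (x y : Rn n) : seg x y 1 = y.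
Proof. apply functional_extensionality. intros. unfold seg. ring. Qed.

Lemma ball_convex n (a : Rn n) r x y t : ball a r x -> ball a r y -> 0 <= t <= 1 -> ball a r (seg x y t).
Proof.
  unfold ball. intros Hx Hy Ht. rewrite dst_nrm.
  pose proof (minkowski n (fun i => (1 - t) * (x i - a i)) (fun i => t * (y i - a i))) as M.
  rewrite !nrm_scal, <- !dst_nrm in M.
  rewrite Rabs_right in M by lra. rewrite Rabs_right in M by lra.
  unfold nrm, norm2 in *. rewrite (sumFin_ext n (fun i => (seg x y t i - a i) ^ 2) (fun i => ((1 - t) * (x i - a i) + t * (y i - a i)) ^ 2)).
  assert ((1 - t) * dist x a + t * dist y a < r) by (destruct (Req_dec t 1); [subst; lra | nra]). lra. intros. unfold seg. ring.
Qed.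
Open Scope R_scope.

Lemma convex_connected n (S : Rn n -> Prop) :
  (forall x y t, S x -> S y -> 0 <= t <= 1 -> S (seg x y t)) -> connected S.
Proof.
  intros Hc [U [V [HU [HV [Hcov [[x [Sx Ux]] [[y [Sy Vy]] Hdis]]]]]]].
  set (d := dist y x). assert (Hd : 0 <= d) by apply dst_nonneg.
  set (E := fun t => 0 <= t <= 1 /\ forall u, 0 <= u <= t -> U (seg x y u)).
  assert (E0 : E 0).
  { split. lra. intros u Hu. replace u with 0 by lra. rewrite seg0. auto. }
  assert (Eb : bound E). { exists 1. intros t [Ht _]. lra. }
  destruct (completeness E Eb (ex_intro _ 0 E0)) as [s [Hs1 Hs2]].
  assert (Hs0 : 0 <= s) by (apply Hs1; auto).
  assert (Hsle : s <= 1) by (apply Hs2; intros t [Ht _]; lra).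
  assert (Hbelow : forall u, 0 <= u < s -> U (seg x y u)).
  { intros u Hu. destruct (classic (exists t, E t /\ u < t)) as [[t [[Ht1 Ht2] Hut]]|Hno].
    - apply Ht2. lra.
    - exfalso. assert (is_upper_bound E u).
      { intros t Et. destruct (Rle_dec t u). auto. exfalso. apply Hno. exists t. split; auto. lra. }
      specialize (Hs2 u H). lra. }
  assert (Sg : S (seg x y s)) by (apply Hc; auto).
  destruct (Hcov _ Sg) as [Us|Vs].
  - destruct (HU _ Us) as [eps [Heps Hball]].
    destruct (Req_dec s 1) as [Hs|Hs].
    + rewrite Hs, seg1 in Us. apply (Hdis y); auto.
    + set (delta := eps / (d + 1)). assert (Hdel : 0 < delta) by (unfold delta; apply Rdiv_lt_0_compat; lra).
      assert (Hdd : delta * d < eps).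
      { unfold delta. unfold Rdiv. rewrite Rmult_assoc.
        assert (/ (d + 1) * d < 1). { apply (Rmult_lt_reg_l (d + 1)). lra. field_simplify; lra. }
        nra. }
      set (t' := Rmin 1 (s + delta / 2)).
      assert (Et' : E t').
      { split. unfold t'. split. apply Rmin_glb; lra. apply Rmin_l.
        intros u Hu. destruct (Rlt_dec u s). apply Hbelow; lra.
        apply Hball. unfold ball. rewrite seg_dist. fold d.
        assert (u <= s + delta / 2) by (pose proof (Rmin_r 1 (s + delta / 2)); unfold t' in Hu; lra).
        rewrite Rabs_right by lra. nra. }
      assert (t' <= s) by (apply Hs1; auto).
      assert (s < t') by (unfold t'; apply Rmin_glb_lt; lra). lra.
  - destruct (HV _ Vs) as [eps [Heps Hball]].
    destruct (Req_dec s 0) as [Hs|Hs].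
    + rewrite Hs, seg0 in Vs. apply (Hdis x); auto.
    + set (delta := eps / (d + 1)). assert (Hdel : 0 < delta) by (unfold delta; apply Rdiv_lt_0_compat; lra).
      assert (Hdd : delta * d < eps).
      { unfold delta. unfold Rdiv. rewrite Rmult_assoc.
        assert (/ (d + 1) * d < 1). { apply (Rmult_lt_reg_l (d + 1)). lra. field_simplify; lra. }
        nra. }
      set (u := Rmax 0 (s - delta / 2)).
      assert (Hu1 : 0 <= u) by apply Rmax_l.
      assert (Hu2 : u < s) by (unfold u; apply Rmax_lub_lt; lra).
      assert (Hu3 : s - delta / 2 <= u) by apply Rmax_r.
      apply (Hdis (seg x y u)).
      * apply Hc; auto; lra.
      * apply Hbelow; lra.
      * apply Hball. unfold ball. rewrite seg_dist. fold d. rewrite Rabs_left by lra. nra.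
Qed.

Lemma ball_connected n (a : Rn n) r : connected (ball a r).
Proof. apply convex_connected. intros. apply ball_convex; auto. Qed.

Lemma connected_part n (A : Rn n -> Prop) (U V : Rn n -> Prop) :
  connected A -> is_open U -> is_open V -> (forall x, A x -> U x \/ V x) ->
  (forall x, A x -> U x -> V x -> False) ->
  (forall x, A x -> U x) \/ (forall x, A x -> V x).
Proof.
  intros HA HU HV Hcov Hdis.
  destruct (classic (exists x, A x /\ V x)) as [[x [Ax Vx]]|HnV].
  - right. intros z Az. destruct (Hcov z Az) as [Uz|Vz]; auto.
    exfalso. apply HA. exists U, V. repeat split; auto. exists z; auto. exists x; auto.
  - left. intros z Az. destruct (Hcov z Az) as [Uz|Vz]; auto. exfalso. apply HnV. exists z; auto.
Qed.

Lemma connected_union n (A B : Rn n -> Prop) :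
  connected A -> connected B -> (exists p, A p /\ B p) -> connected (fun z => A z \/ B z).
Proof.
  intros HA HB [p [Ap Bp]] [U [V [HU [HV [Hcov [[x [Sx Ux]] [[y [Sy Vy]] Hdis]]]]]]].
  assert (HAp := connected_part n A U V HA HU HV (fun z Hz => Hcov z (or_introl Hz)) (fun z Hz => Hdis z (or_introl Hz))).
  assert (HBp := connected_part n B U V HB HU HV (fun z Hz => Hcov z (or_intror Hz)) (fun z Hz => Hdis z (or_intror Hz))).
  destruct (Hcov p (or_introl Ap)) as [Up|Vp].
  - destruct HAp as [HAU|HAV]; [|exact (Hdis p (or_introl Ap) Up (HAV p Ap))].
    destruct HBp as [HBU|HBV]; [|exact (Hdis p (or_introl Ap) Up (HBV p Bp))].
    destruct Sy as [Ay|By]. exact (Hdis y (or_introl Ay) (HAU y Ay) Vy). exact (Hdis y (or_intror By) (HBU y By) Vy).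
  - destruct HAp as [HAU|HAV]; [exact (Hdis p (or_introl Ap) (HAU p Ap) Vp)|].
    destruct HBp as [HBU|HBV]; [exact (Hdis p (or_introl Ap) (HBU p Bp) Vp)|].
    destruct Sx as [Ax|Bx]. exact (Hdis x (or_introl Ax) Ux (HAV x Ax)). exact (Hdis x (or_intror Bx) Ux (HBV x Bx)).
Qed.

Lemma comp_absorb n (U C S : Rn n -> Prop) :
  conn_component U C -> connected S -> (forall x, S x -> U x) -> (exists p, C p /\ S p) ->
  forall x, S x -> C x.
Proof.
  intros [_ [HC [HCU Hmax]]] HS HSU Hp x Sx.
  apply (Hmax (fun z => C z \/ S z)); auto.
  - apply connected_union; auto.
  - intros z [Cz|Sz]; auto.
Qed.

Lemma adj_iff n (a b : Rn n) r s :
  (0 < r /\ 0 < s /\ sumFin n (fun i => (a i - b i) ^ 2) < (r + s) ^ 2) <->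
  exists z, ball a r z /\ ball b s z.
Proof.
  rewrite <- dst_sq. split.
  - intros [Hr [Hs Hd]]. pose proof (dst_nonneg n a b) as Hd0.
    assert (Hlt : dist a b < r + s) by nra.
    set (t := r / (r + s)).
    exists (seg a b t). unfold ball. split.
    + rewrite <- (seg0 n a b) at 2. rewrite seg_dist, dst_sym. unfold t.
      rewrite Rabs_right. 2: { unfold Rdiv. rewrite Rminus_0_r. apply Rle_ge. apply Rmult_le_pos; [lra|]. left; apply Rinv_0_lt_compat; lra. }
      rewrite Rminus_0_r. apply (Rmult_lt_reg_l (r + s)). lra.
      field_simplify; try lra. nra.
    + rewrite <- (seg1 n a b) at 2. rewrite seg_dist, dst_sym. unfold t.
      replace (r / (r + s) - 1) with (- (s / (r + s))) by (field; lra).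
      rewrite Rabs_Ropp, Rabs_right.
      2: { apply Rle_ge. unfold Rdiv. apply Rmult_le_pos; [lra|]. left; apply Rinv_0_lt_compat; lra. }
      apply (Rmult_lt_reg_l (r + s)). lra.
      field_simplify; try lra. nra.
  - intros [z [Hz1 Hz2]]. unfold ball in *.
    pose proof (dst_nonneg n z a). pose proof (dst_nonneg n z b).
    pose proof (dst_tri n a z b). rewrite (dst_sym n a z) in H1.
    pose proof (dst_nonneg n a b).
    split. lra. split. lra. nra.
Qed.
Open Scope nat_scope.

Lemma decQvec_F1 n c : decQvec (S n) c Fin.F1 = Q2R (decQ (cx c)).
Proof. unfold decQvec. simpl. rewrite cx_cy. reflexivity. Qed.

Lemma decQvec_FS n c i : decQvec (S n) c (Fin.FS i) = decQvec n (cy c) i.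
Proof.
  unfold decQvec. simpl. destruct (Fin.to_nat i) as [j Hj] eqn:E. simpl.
  rewrite cx_cy. simpl. reflexivity.
Qed.

Fixpoint sqs (n : nat) (c1 c2 : nat) : rq :=
  match n with
  | 0 => rzero
  | S m => radd (rmul (rsub (qdec (cx c1)) (qdec (cx c2))) (rsub (qdec (cx c1)) (qdec (cx c2))))
                (sqs m (cy c1) (cy c2))
  end.

Lemma rsub_pos a b : 0 < qD a -> 0 < qD b -> 0 < qD (rsub a b).
Proof. intros. simpl. lia. Qed.

Lemma radd_pos a b : 0 < qD a -> 0 < qD b -> 0 < qD (radd a b).
Proof. intros. unfold radd. cbn [qD]. nia. Qed.
Lemma rmul_pos a b : 0 < qD a -> 0 < qD b -> 0 < qD (rmul a b).
Proof. intros. unfold rmul. cbn [qD]. nia. Qed.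

Lemma sqs_pos n : forall c1 c2, 0 < qD (sqs n c1 c2).
Proof.
  induction n; intros. simpl; lia. cbn [sqs].
  apply radd_pos; auto. apply rmul_pos; apply rsub_pos; apply qdec_pos.
Qed.

Lemma sqs_val n : forall c1 c2, val (sqs n c1 c2) = sumFin n (fun i => (decQvec n c1 i - decQvec n c2 i) ^ 2)%R.
Proof.
  induction n; intros; simpl sqs. apply rzero_val.
  assert (H1 := qdec_pos (cx c1)). assert (H2 := qdec_pos (cx c2)).
  rewrite radd_val. rewrite rmul_val. rewrite rsub_val by auto. rewrite IHn.
  simpl sumFin. rewrite decQvec_F1, decQvec_F1, !qdec_val.
  f_equal. ring. apply sumFin_ext. intros i. rewrite !decQvec_FS. auto.
  all: try apply rsub_pos; try apply rmul_pos; try apply rsub_pos; auto. apply sqs_pos.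
Qed.

Lemma PRQ_sqs n : forall k g1 g2, PRk k g1 -> PRk k g2 -> PRQ k (fun v => sqs n (g1 v) (g2 v)).
Proof.
  induction n; intros k g1 g2 H1 H2; simpl. apply PRQ_zero.
  apply PRQ_add. apply PRQ_mul; apply PRQ_sub; apply PRQ_qdec; apply (pc1 _ _ _ PR1_cx); auto.
  apply IHn; apply (pc1 _ _ _ PR1_cy); auto.
Qed.

Definition rad (k : nat) : R := Q2R (decQ (cy k)).
Definition ctr (n k : nat) : Rn n := decQvec n (cx k).

Definition adjR (n j k : nat) : Prop :=
  (0 < rad j /\ 0 < rad k /\ sumFin n (fun i => (ctr n j i - ctr n k i) ^ 2) < (rad j + rad k) ^ 2)%R.

Definition adjt (n j k : nat) : nat :=
  rlt rzero (qdec (cy j)) + rlt rzero (qdec (cy k)) +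
  rlt (sqs n (cx j) (cx k)) (rmul (radd (qdec (cy j)) (qdec (cy k))) (radd (qdec (cy j)) (qdec (cy k)))).

Lemma adjt_spec n j k : adjt n j k = 0 <-> adjR n j k.
Proof.
  unfold adjt, adjR, rad, ctr.
  assert (Hj := qdec_pos (cy j)). assert (Hk := qdec_pos (cy k)).
  assert (Hs := sqs_pos n (cx j) (cx k)).
  assert (Ha : 0 < qD (radd (qdec (cy j)) (qdec (cy k)))) by (apply radd_pos; auto).
  assert (Hm : 0 < qD (rmul (radd (qdec (cy j)) (qdec (cy k))) (radd (qdec (cy j)) (qdec (cy k))))) by (apply rmul_pos; auto).
  rewrite <- sqs_val, !qdec_val.
  rewrite <- rzero_val, <- rlt_spec, <- rlt_spec, <- (radd_val _ _ Hj Hk).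
  replace (val (radd (qdec (cy j)) (qdec (cy k))) ^ 2)%R with
    (val (rmul (radd (qdec (cy j)) (qdec (cy k))) (radd (qdec (cy j)) (qdec (cy k))))).
  rewrite <- rlt_spec. split; intros; lia. all: auto.
  rewrite rmul_val by auto. ring.
Qed.

Lemma beta_eq n k : beta n k = ball (ctr n k) (rad k).
Proof. unfold beta, ctr, rad. rewrite cx_cy. reflexivity. Qed.

Lemma adjR_iff n j k : adjR n j k <-> exists z, beta n j z /\ beta n k z.
Proof. rewrite !beta_eq. unfold adjR. apply adj_iff. Qed.

Lemma PRk_elem k g1 g2 : PRk k g1 -> PRk k g2 -> PRk k (fun v => elem (g1 v) (g2 v)).
Proof. intros. unfold elem. apply (pc1 _ _ _ PR1_cx). apply (pc2 _ _ _ _ PR2_itr); auto. Qed.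

Lemma PRk_adjt n k g1 g2 : PRk k g1 -> PRk k g2 -> PRk k (fun v => adjt n (g1 v) (g2 v)).
Proof.
  intros H1 H2. unfold adjt.
  assert (Q1 : PRQ k (fun v => qdec (cy (g1 v)))) by (apply PRQ_qdec; apply (pc1 _ _ _ PR1_cy); auto).
  assert (Q2 : PRQ k (fun v => qdec (cy (g2 v)))) by (apply PRQ_qdec; apply (pc1 _ _ _ PR1_cy); auto).
  apply (pc2 _ _ _ _ PR2_add). apply (pc2 _ _ _ _ PR2_add).
  apply PRk_rlt; auto. apply PRQ_zero. apply PRk_rlt; auto. apply PRQ_zero.
  apply PRk_rlt. apply PRQ_sqs; apply (pc1 _ _ _ PR1_cx); auto.
  apply PRQ_mul; apply PRQ_add; auto.
Qed.

Lemma PRk_f (f : PR) k g1 g2 : PRk k g1 -> PRk k g2 -> PRk k (fun v => PReval f [g1 v; g2 v]).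
Proof.
  intros H1 H2. apply (pc2 _ (fun a b => PReval f [a; b])); auto.
  exists (PRcomp f [PRproj 0; PRproj 1]). intros v. reflexivity.
Qed.

Definition eqt (a b : nat) : nat := (a - b) + (b - a).

Definition Fch (n : nat) (f : PR) (k0 k y : nat) : nat :=
  eqt (elem (cx (cy y)) 0) k + eqt (elem (cx (cy y)) (cx y)) k0
  + bsum (S (cx y)) (fun i => PReval f [elem (cx (cy y)) i; elem (cy (cy y)) i])
  + bsum (cx y) (fun i => adjt n (elem (cx (cy y)) i) (elem (cx (cy y)) (S i))).

Lemma PRk_Fch n f k0 : PRk 2 (fun v => Fch n f k0 (nth 0 v 0) (nth 1 v 0)).
Proof.
  unfold Fch.
  assert (Hy : PRk 2 (fun v => nth 1 v 0)) by (apply PRk_proj; lia).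
  assert (Hy3 : PRk 3 (fun v => nth 2 v 0)) by (apply PRk_proj; lia).
  assert (Hi3 : PRk 3 (fun v => nth 0 v 0)) by (apply PRk_proj; lia).
  apply (pc2 _ _ _ _ PR2_add). apply (pc2 _ _ _ _ PR2_add). apply (pc2 _ _ _ _ PR2_add).
  - unfold eqt. apply (pc2 _ _ _ _ PR2_add); apply (pc2 _ _ _ _ PR2_sub);
      try apply PRk_elem; try apply (pc1 _ _ _ PR1_cx); try apply (pc1 _ _ _ PR1_cy);
      try apply PRk_const; try apply PRk_proj; lia.
  - unfold eqt. apply (pc2 _ _ _ _ PR2_add); apply (pc2 _ _ _ _ PR2_sub);
      try apply PRk_elem; try apply (pc1 _ _ _ PR1_cx); try apply (pc1 _ _ _ PR1_cy);
      try apply (pc1 _ _ _ PR1_cx); try apply PRk_const; try apply PRk_proj; try lia; auto.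
  - apply (PRk_bsum 2 _ (fun l => PReval f [elem (cx (cy (nth 2 l 0))) (nth 0 l 0); elem (cy (cy (nth 2 l 0))) (nth 0 l 0)])).
    + apply (pc1 _ _ _ PRk_succ0). apply (pc1 _ _ _ PR1_cx). auto.
    + apply PRk_f; apply PRk_elem; auto; apply (pc1 _ _ _ PR1_cx) || apply (pc1 _ _ _ PR1_cy);
        apply (pc1 _ _ _ PR1_cy); auto.
  - apply (PRk_bsum 2 _ (fun l => adjt n (elem (cx (cy (nth 2 l 0))) (nth 0 l 0)) (elem (cx (cy (nth 2 l 0))) (S (nth 0 l 0))))).
    + apply (pc1 _ _ _ PR1_cx). auto.
    + apply PRk_adjt; apply PRk_elem; auto; try (apply (pc1 _ _ _ PR1_cx); apply (pc1 _ _ _ PR1_cy); auto).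
      apply (pc1 _ _ _ PRk_succ0); auto.
Qed.
Open Scope nat_scope.

Inductive reach (W : nat -> Prop) (A : nat -> nat -> Prop) (k0 : nat) : nat -> Prop :=
| rbase : W k0 -> reach W A k0 k0
| rstep j k : reach W A k0 j -> W k -> A k j -> reach W A k0 k.

Definition chain n f k0 k L (s w : nat -> nat) : Prop :=
  s 0 = k /\ s L = k0 /\ (forall i, i <= L -> PReval f [s i; w i] = 0) /\
  (forall i, i < L -> adjR n (s i) (s (S i))).

Lemma chain_reach n f k0 (W : nat -> Prop) (Hf : forall x, W x <-> exists y, PReval f [x; y] = 0) k L s w :
  chain n f k0 k L s w -> reach W (adjR n) k0 k.
Proof.
  intros [H0 [HL [Hw Ha]]].
  assert (forall d, d <= L -> reach W (adjR n) k0 (s (L - d))).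
  { induction d; intros Hd.
    - rewrite Nat.sub_0_r, HL. apply rbase. rewrite <- HL. apply Hf. exists (w L). apply Hw. lia.
    - apply (rstep _ _ _ (s (L - d))). apply IHd; lia.
      apply Hf. exists (w (L - S d)). apply Hw. lia.
      replace (L - d) with (S (L - S d)) by lia. apply Ha. lia. }
  rewrite <- H0. replace 0 with (L - L) by lia. apply H. lia.
Qed.

Lemma reach_chain n f k0 (W : nat -> Prop) (Hf : forall x, W x <-> exists y, PReval f [x; y] = 0) k :
  reach W (adjR n) k0 k -> exists L s w, chain n f k0 k L s w.
Proof.
  induction 1 as [Hk0|j k Hj IH Wk Ajk].
  - apply Hf in Hk0. destruct Hk0 as [y Hy]. exists 0, (fun _ => k0), (fun _ => y).
    split. reflexivity. split. reflexivity. split. intros; auto. intros; lia.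
  - destruct IH as [L [s [w [H0 [HL [Hw Ha]]]]]].
    apply Hf in Wk. destruct Wk as [y Hy].
    exists (S L), (fun i => match i with 0 => k | S i => s i end),
      (fun i => match i with 0 => y | S i => w i end).
    split. reflexivity. split. auto. split.
    + intros [|i] Hi; auto. apply Hw. lia.
    + intros [|i] Hi. rewrite H0. auto. apply Ha. lia.
Qed.

Lemma Fch_spec n f k0 k y : Fch n f k0 k y = 0 <-> chain n f k0 k (cx y) (elem (cx (cy y))) (elem (cy (cy y))).
Proof.
  unfold Fch, chain, eqt.
  set (L := cx y). set (s := elem (cx (cy y))). set (w := elem (cy (cy y))).
  split.
  - intros H. assert (H1 : bsum (S L) (fun i => PReval f [s i; w i]) = 0) by lia.
    assert (H2 : bsum L (fun i => adjt n (s i) (s (S i))) = 0) by lia.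
    rewrite bsum_0 in H1, H2.
    split. lia. split. lia. split.
    + intros i Hi. apply H1. lia.
    + intros i Hi. apply adjt_spec. apply H2. auto.
  - intros [H0 [HL [Hw Ha]]].
    assert (H1 : bsum (S L) (fun i => PReval f [s i; w i]) = 0).
    { apply bsum_0. intros. apply Hw. lia. }
    assert (H2 : bsum L (fun i => adjt n (s i) (s (S i))) = 0).
    { apply bsum_0. intros. apply adjt_spec. apply Ha. auto. }
    rewrite H1, H2, H0, HL. lia.
Qed.

Lemma chain_ext n f k0 k L s w s' w' :
  (forall i, i <= L -> s i = s' i) -> (forall i, i <= L -> w i = w' i) ->
  chain n f k0 k L s w -> chain n f k0 k L s' w'.
Proof.
  intros Hs Hw [H0 [HL [Hf Ha]]]. split; [|split; [|split]].
  - rewrite <- Hs by lia. auto.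
  - rewrite <- Hs by lia. auto.
  - intros i Hi. rewrite <- Hs, <- Hw by lia. auto.
  - intros i Hi. rewrite <- !Hs by lia. auto.
Qed.

Lemma fun_repr (s : nat -> nat) L : exists m, forall i, i <= L -> elem m i = s i.
Proof.
  destruct (elem_repr (map s (seq 0 (S L)))) as [m Hm]. exists m. intros i Hi.
  rewrite Hm. rewrite nth_indep with (d' := s 0). rewrite map_nth, seq_nth. auto. lia.
  rewrite length_map, length_seq. lia. rewrite length_map, length_seq. lia.
Qed.

Lemma ce_reach n f k0 (W : nat -> Prop) (Hf : forall x, W x <-> exists y, PReval f [x; y] = 0) :
  ce (reach W (adjR n) k0).
Proof.
  destruct (PRk_Fch n f k0) as [p Hp]. exists p. intros x.
  assert (E : forall y, PReval p [x; y] = Fch n f k0 x y) by (intros; rewrite Hp; reflexivity).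
  split.
  - intros Hr. destruct (reach_chain n f k0 W Hf x Hr) as [L [s [w Hc]]].
    destruct (fun_repr s L) as [ms Hms]. destruct (fun_repr w L) as [mw Hmw].
    exists (to_nat (L, to_nat (ms, mw))). rewrite E. apply Fch_spec.
    rewrite !cx_pair, !cy_pair, cx_pair.
    apply (chain_ext n f k0 x L s w); auto; intros; symmetry; auto.
  - intros [y Hy]. rewrite E in Hy. apply Fch_spec in Hy. eapply chain_reach; eauto.
Qed.

Open Scope R_scope.

Lemma sem_main n (U C : Rn n -> Prop) (W : nat -> Prop) k0 x0 :
  (forall x, U x <-> exists k, W k /\ beta n k x) -> conn_component U C ->
  W k0 -> beta n k0 x0 -> C x0 ->
  forall x, C x <-> exists k, reach W (adjR n) k0 k /\ beta n k x.
Proof.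
  intros HU HC Wk0 Bx0 Cx0.
  assert (Hball : forall k, connected (beta n k)) by (intros; rewrite beta_eq; apply ball_connected).
  assert (Hopen : forall k, is_open (beta n k)) by (intros; rewrite beta_eq; apply ball_open).
  assert (Hsub : forall k, W k -> forall z, beta n k z -> U z) by (intros k Wk z Hz; apply HU; eauto).
  assert (Sound : forall k, reach W (adjR n) k0 k -> forall z, beta n k z -> C z).
  { induction 1 as [_|j k Hj IH Wk Akj].
    - apply (comp_absorb n U C); [exact HC|apply Hball|apply Hsub; auto|exists x0; auto].
    - apply (comp_absorb n U C); [exact HC|apply Hball|apply Hsub; auto|].
      apply adjR_iff in Akj. destruct Akj as [z [Bk Bj]].
      exists z. split; auto. }
  intros x. split.
  - intros Cx. apply NNPP. intros Hno.
    destruct HC as [_ [Hconn [HCU _]]]. apply Hconn.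
    exists (fun z => exists k, reach W (adjR n) k0 k /\ beta n k z).
    exists (fun z => exists k, W k /\ ~ reach W (adjR n) k0 k /\ beta n k z).
    repeat split.
    + intros z [k [Rk Bz]]. destruct (Hopen k z Bz) as [eps [He Hb]]. exists eps. split; auto.
      intros y Hy. exists k. split; auto.
    + intros z [k [Wk [Rk Bz]]]. destruct (Hopen k z Bz) as [eps [He Hb]]. exists eps. split; auto.
      intros y Hy. exists k. split; auto.
    + intros z Cz. destruct (proj1 (HU z) (HCU z Cz)) as [k [Wk Bz]].
      destruct (classic (reach W (adjR n) k0 k)). left; eauto. right; eauto.
    + exists x0. split; auto. exists k0. split; auto. apply rbase; auto.
    + exists x. split; auto. destruct (proj1 (HU x) (HCU x Cx)) as [k [Wk Bx]].
      exists k. repeat split; auto. intros Rk. apply Hno. eauto.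
    + intros z Cz [j [Rj Bj]] [k [Wk [Rk Bk]]]. apply Rk. apply (rstep _ _ _ j); auto.
      apply adjR_iff. eauto.
  - intros [k [Rk Bx]]. eapply Sound; eauto.
Qed.

Theorem lemma4p3 (n : nat) (Hn : (1 <= n)%nat) (U C : Rn n -> Prop) :
  effectively_open U -> conn_component U C -> effectively_open C.
Proof.
  intros [W [[f Hf] HU]] HC.
  destruct HC as [[x0 Cx0] HC'] eqn:EC. clear EC.
  destruct HC' as [_ [HCU _]].
  destruct (proj1 (HU x0) (HCU x0 Cx0)) as [k0 [Wk0 Bx0]].
  exists (reach W (adjR n) k0). split.
  - apply (ce_reach n f k0 W). exact Hf.
  - apply (sem_main n U C W k0 x0); auto.
Qed.
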